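(* Let $n\ge3$ and $k$ be an integer with $1\le k<\lfloor n/2\rfloor$. Then there is a bijection between $\mathcal D_{k,n}$ and the set $\mathcal A_{k+1}$ of non-interval permutations of length $k+1$; in particular $|\mathcal D_{k,n}|=|\mathcal A_{k+1}|$. (Explicitly, with $\mathcal B_{k+1}=\{\tilde b: b\in\mathcal A_{k+1}\}$, the map $u\mapsto{\rm red}(u\,a)$ with $a=\min([n]\setminus{\rm alph}(u))$ is a bijection $\mathcal D_{k,n}\to\mathcal B_{k+1}$.)
   Context: $[m,n]=\{m,\ldots,n\}$, $[n]=[1,n]$; ${\rm alph}(w)$ is the set of letters of $w$; $\tilde w$ is the reversal of a word $w$. For a word $\tau$ of distinct positive integers, ${\rm red}(\tau)$ replaces the smallest letter by $1$, the second smallest by $2$, etc. A finite set $A\subset\mathbb P$ with $|A|\ge2$ is periodic if the differences between consecutive elements (in increasing order) are all equal. For $n\ge3$, $k\in[n-2]$, $\mathcal D_{k,n}$ is the set of words $u=u_1\cdots u_k$ of $k$ distinct letters of $[n]$ such that $[n]\setminus\{u_1,\ldots,u_k\}$ is periodic and for every $j<k$ the set $[n]\setminus\{u_1,\ldots,u_j\}$ is not periodic. A permutation $s=s_1\cdots s_N$ of $[N]$, $N\ge2$, is non-interval if for every $l$ with $2\le l<N$ the set $\{s_1,\ldots,s_l\}$ is not of the form $[c,c+l-1]$ for any integer $c$. *)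

(* Defs.v *)
From mathcomp Require Import all_boot all_order all_algebra.
Import Order.TTheory GRing.Theory Num.Theory.
Set Implicit Arguments.
Unset Strict Implicit.
Unset Printing Implicit Defensive.

Definition compl (n : nat) (u : seq nat) : seq nat :=
  [seq x <- iota 1 n | x \notin u].

(* A finite set of positive integers, given by its increasing enumeration s,
   is periodic: |s| >= 2 and all consecutive differences are equal. *)
Definition periodic (s : seq nat) : Prop :=
  2 <= size s /\
  forall i, i.+1 < size s ->
    nth 0 s i.+1 - nth 0 s i = nth 0 s 1 - nth 0 s 0.

Definition inD (k n : nat) (u : seq nat) : Prop :=
  size u = k /\ uniq u /\ all (fun x => 1 <= x <= n) u /\
  periodic (compl n u) /\
  (forall j, 1 <= j -> j < k -> ~ periodic (compl n (take j u))).

Definition red (t : seq nat) : seq nat :=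
  [seq count (fun y => y <= x) t | x <- t].

Definition inA (N : nat) (s : seq nat) : Prop :=
  2 <= N /\ perm_eq s (iota 1 N) /\
  forall l, 2 <= l -> l < N ->
    ~ (exists c : int, forall x : nat, (x \in take l s) <-> (c <= (x%:Z) <= c + (l%:Z) - 1)%R).

Definition inB (N : nat) (b : seq nat) : Prop :=
  exists a, inA N a /\ b = rev a.

(* a = min([n] \ alph(u)) (compl is increasing), and the map u |-> red(u a). *)
Definition phi (n : nat) (u : seq nat) : seq nat :=
  red (rcons u (head 0 (compl n u))).

(* Main.v *)
Require Import Defs.
From mathcomp Require Import all_boot.
From mathcomp Require Import all_order all_algebra zify.

Lemma mem_compl n v x : (x \in compl n v) = (1 <= x <= n) && (x \notin v).
Proof. by rewrite /compl mem_filter mem_iota andbC; congr (_ && _); lia. Qed.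

Lemma compl_iota n v a b :
  (forall x, 1 <= x <= n -> (x \in v) = ~~ (a <= x < a + b)) ->
  1 <= a -> a + b <= n.+1 -> compl n v = iota a b.
Proof.
move=> H h1 h2.
apply: (irr_sorted_eq ltn_trans ltnn).
- by rewrite /compl; apply: (sorted_filter ltn_trans); exact: iota_ltn_sorted.
- exact: iota_ltn_sorted.
move=> x; rewrite mem_compl mem_iota.
case: (boolP (1 <= x <= n)) => hx /=.
  by rewrite H // negbK.
apply/esym/negbTE; apply/negP => hh; move/negP: hx; apply; lia.
Qed.

Lemma periodic_iota a b : 2 <= b -> periodic (iota a b).
Proof.
move=> hb; split; first by rewrite size_iota.
move=> i; rewrite size_iota => hi.
rewrite !nth_iota //; lia.
Qed.

Lemma size_compl n v : uniq v -> all (fun x => 1 <= x <= n) v ->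
  size (compl n v) = n - size v.
Proof.
move=> hu ha.
have hp : perm_eq [seq x <- iota 1 n | x \in v] v.
  apply: uniq_perm; first exact: filter_uniq (iota_uniq _ _).
    exact: hu.
  move=> x; rewrite mem_filter mem_iota.
  case hx: (x \in v) => //=.
  by move/allP: ha => /(_ x hx); rewrite add1n ltnS.
have := count_predC (mem v) (iota 1 n).
rewrite size_iota -size_filter (perm_size hp) /compl size_filter.
move=> h; rewrite (@eq_count _ _ (predC (mem v))) //; lia.
Qed.

Definition gg (c e y : nat) := if y <= c then y else y + e.
Definition ff (c e x : nat) := if x <= c then x else x - e.

Lemma gg_mono c e x y : (gg c e x <= gg c e y) = (x <= y).
Proof. rewrite /gg; case: (leqP x c) => hx; case: (leqP y c) => hy; apply/idP/idP => h; lia. Qed.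

Lemma gg_inj c e : injective (gg c e).
Proof. by move=> x y h; apply/eqP; rewrite eqn_leq -(gg_mono c e x y) -(gg_mono c e y x) h leqnn. Qed.

Lemma red_mono h t : (forall x y, (h x <= h y) = (x <= y)) -> red (map h t) = red t.
Proof.
move=> H; rewrite /red -map_comp; apply: eq_map => x /=.
rewrite count_map; apply: eq_count => y /=; exact: H.
Qed.

Lemma count_le_iota x N : x <= N -> count (fun y => y <= x) (iota 1 N) = x.
Proof.
move=> hx; rewrite -(subnKC hx) iotaD count_cat.
rewrite (@eq_in_count _ _ predT) ?count_predT ?size_iota; last first.
  by move=> y; rewrite mem_iota /=; lia.
rewrite (@eq_in_count _ _ pred0) ?count_pred0 ?addn0 //.
by move=> y; rewrite mem_iota /=; lia.
Qed.

Lemma red_id t N : perm_eq t (iota 1 N) -> red t = t.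
Proof.
move=> hp; rewrite /red; apply: map_id_in => x hx.
rewrite (permP hp).
have := hx; rewrite (perm_mem hp) mem_iota => hb.
rewrite count_le_iota //; lia.
Qed.

Lemma compl_sorted n v : sorted ltn (compl n v).
Proof. by rewrite /compl; apply: (sorted_filter ltn_trans); exact: iota_ltn_sorted. Qed.

Lemma periodic_compl n v : uniq v -> all (fun x => 1 <= x <= n) v ->
  2 * size v + 2 <= n -> periodic (compl n v) ->
  compl n v = iota (head 0 (compl n v)) (n - size v) /\
  1 <= head 0 (compl n v) /\ head 0 (compl n v) + (n - size v) <= n.+1.
Proof.
move=> hu ha hn [h2 hper].
have hsz : size (compl n v) = n - size v := @size_compl n v hu ha.
have hs := compl_sorted n v.
move: h2 hper hsz hs; rewrite -!nth0; set s := compl n v => h2 hper hsz hs.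
have hlt : forall i, i.+1 < size s -> nth 0 s i < nth 0 s i.+1.
  move=> i hi; apply: (sorted_ltn_nth ltn_trans 0 hs); rewrite ?inE //; lia.
have hin : forall i, i < size s -> 1 <= nth 0 s i <= n.
  by move=> i hi; have := mem_nth 0 hi; rewrite mem_compl => /andP[].
set d := nth 0 s 1 - nth 0 s 0.
have hnth : forall i, i < size s -> nth 0 s i = nth 0 s 0 + i * d.
  elim=> [|i IH] hi; first by rewrite mul0n addn0.
  have := hper i hi; have := hlt i hi; have := IH (ltnW hi); rewrite mulSn; lia.
have hd1 : 1 <= d by have := hlt 0 h2; rewrite /d; lia.
have hd : d = 1.
  case: (leqP d 1) => hd; first lia.
  exfalso.
  have hl : (size s).-1 < size s by lia.
  have := hnth _ hl; have := hin _ hl; have := hin 0 (ltnW h2).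
  have := leq_mul (leqnn (size s).-1) hd; lia.
have hss : s = iota (nth 0 s 0) (size s).
  apply: (@eq_from_nth _ 0); first by rewrite size_iota.
  by move=> i hi; rewrite nth_iota // hnth // hd muln1.
split; first by rewrite -hsz.
have hl : (size s).-1 < size s by lia.
have := hnth _ hl; have := hin _ hl; have := hin 0 (ltnW h2); lia.
Qed.

Lemma mem_drop_uniq (s : seq nat) j x : uniq s ->
  (x \in drop j s) = (x \in s) && (x \notin take j s).
Proof.
move=> hu; have : uniq (take j s ++ drop j s) by rewrite cat_take_drop.
rewrite cat_uniq => /and3P[_ hh _].
case hx: (x \in drop j s).
  by rewrite (mem_drop hx) /=; apply/esym; exact: (hasPn hh x hx).
apply/esym/negbTE/negP => /andP[h1 h2]; move: h1.
by rewrite -(cat_take_drop j s) mem_cat hx orbF; apply/negP.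
Qed.

Lemma forward n k u : 1 <= k -> 2 * k + 2 <= n -> inD k n u ->
  let c := head 0 (compl n u) in
  compl n u = iota c (n - k) /\ 1 <= c /\ c + (n - k) <= n.+1 /\
      phi n u = map (ff c (n - k - 1)) (rcons u c) /\
      map (gg c (n - k - 1)) (phi n u) = rcons u c /\
      perm_eq (phi n u) (iota 1 k.+1) /\ last 0 (phi n u) = c.
Proof.
move=> hk hn [hsz [hu [ha [hp hpre]]]].
have hn' : 2 * size u + 2 <= n by rewrite hsz.
have [hc [c1 c2]] := @periodic_compl n u hu ha hn' hp.
rewrite hsz in hc c2.
rewrite /phi; set c := head 0 (compl n u); set e := n - k - 1.
have hmem : forall x : nat, x \in u -> [&& 1 <= x, x <= n & (x < c) || (c + (n - k) <= x)].
  move=> x hx; have := allP ha x hx.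
  have : x \notin compl n u by rewrite mem_compl hx andbF.
  rewrite hc mem_iota; lia.
have hcu : c \notin u.
  have : c \in compl n u by rewrite hc mem_iota; lia.
  by rewrite mem_compl => /andP[].
have hgf : {in rcons u c, cancel (ff c e) (gg c e)}.
  move=> x; rewrite mem_rcons inE => /orP[/eqP -> | hx].
    by rewrite /ff /gg leqnn leqnn.
  have := hmem x hx; rewrite /ff /gg /e.
  case: (leqP x c) => h1; first by rewrite h1.
  move=> h2; have -> : (x - (n - k - 1) <= c) = false by apply/negbTE; lia.
  lia.
set t := map (ff c e) (rcons u c).
have hgt : map (gg c e) t = rcons u c by rewrite -map_comp; apply: map_id_in.
have hut : uniq (rcons u c) by rewrite rcons_uniq hcu hu.
have htu : uniq t by apply: (@map_uniq _ _ (gg c e)); rewrite hgt.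
have hti : {subset t <= iota 1 k.+1}.
  move=> y /mapP [x hx ->]; rewrite mem_iota.
  move: hx; rewrite mem_rcons inE => /orP[/eqP -> | hx].
    rewrite /ff leqnn; lia.
  have := hmem x hx; rewrite /ff /e; case: (leqP x c) => h1; lia.
have hsz' : size (iota 1 k.+1) <= size t by rewrite size_iota size_map size_rcons hsz.
have [_ hteq] := uniq_min_size htu hti hsz'.
have hperm : perm_eq t (iota 1 k.+1) by apply: uniq_perm => //; exact: iota_uniq.
have hphi : red (rcons u c) = t.
  by rewrite -{1}hgt (@red_mono (gg c e) t (gg_mono c e)) (@red_id t k.+1 hperm).
rewrite hphi; do 6 (split => //).
by rewrite /t map_rcons last_rcons /ff leqnn.
Qed.

Lemma gg_arith n k j l a c x : j + l = k.+1 -> k.+1 <= n -> a <= c -> c < a + l ->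
  (a <= gg c (n - k - 1) x < a + (n - j)) = (a <= x < a + l).
Proof. move=> *; rewrite /gg; case: (leqP x c) => h; apply/idP/idP; lia. Qed.

Lemma key n k j l a c (t : seq nat) : j + l = k.+1 -> k.+1 <= n -> 1 <= a ->
  a + l <= k.+2 -> perm_eq t (iota 1 k.+1) -> c \in drop j t ->
  (forall x : nat, (x \in drop j t) = (a <= x < a + l)) <->
  (forall x : nat, 1 <= x <= n ->
     (x \in map (gg c (n - k - 1)) (take j t)) = ~~ (a <= x < a + (n - j))).
Proof.
move=> hjl hkn ha1 hal hp hc.
have hu : uniq t by rewrite (perm_uniq hp) iota_uniq.
have ht : forall x : nat, (x \in t) = (1 <= x <= k.+1).
  by move=> x; rewrite (perm_mem hp) mem_iota; lia.
have hct : 1 <= c <= k.+1 by rewrite -ht (mem_drop hc).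
have hcnt : c \notin take j t.
  by move: hc; rewrite mem_drop_uniq // => /andP[].
set e := n - k - 1.
split => [hD | hM].
- have /andP [hac hca] : a <= c < a + l by rewrite -hD.
  move=> x hx; apply/idP/idP.
  + move=> /mapP [y hy ->].
    have hyt := mem_take hy.
    have hyd : y \notin drop j t by rewrite mem_drop_uniq // hyt hy.
    rewrite (@gg_arith n k j l a c y hjl hkn hac hca).
    by rewrite -hD.
  + move=> hx2; apply/mapP; exists (ff c e x); last first.
      move: hx2; rewrite /ff /gg /e; case: (leqP x c) => h1 h2.
        by rewrite h1.
      have -> : (x - (n - k - 1) <= c) = false by apply/negbTE; lia.
      lia.
    have hgf : gg c e (ff c e x) = x.
      move: hx2; rewrite /ff /gg /e; case: (leqP x c) => h1 h2.
        by rewrite h1.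
      have -> : (x - (n - k - 1) <= c) = false by apply/negbTE; lia.
      lia.
    have hyt : ff c e x \in t.
      rewrite ht; move: hx2; rewrite /ff /e; case: (leqP x c) => h1 h2; lia.
    have hyd : ff c e x \notin drop j t.
      by rewrite hD -(@gg_arith n k j l a c _ hjl hkn hac hca) hgf.
    have := @mem_drop_uniq t j (ff c e x) hu; rewrite hyt (negbTE hyd) /=.
    by move/esym/negbFE.
- have hc1 : a <= c < a + (n - j).
    have hcn : 1 <= c <= n by lia.
    have hnot : c \notin map (gg c e) (take j t).
      apply/negP => /mapP [y hy heq].
      have hyc : y = c by apply: (@gg_inj c e); rewrite -heq /gg leqnn.
      by rewrite -hyc hy in hcnt.
    by move: (hM c hcn); rewrite (negbTE hnot) => /esym/negbFE.
  have hc2 : a <= c + e < a + (n - j).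
    have hcn : 1 <= c + e <= n by rewrite /e; lia.
    have hnot : c + e \notin map (gg c e) (take j t).
      apply/negP => /mapP [y hy]; rewrite /gg; case: (leqP y c) => hyc heq.
        have hyc' : y = c by lia.
        by rewrite -hyc' hy in hcnt.
      have hyc' : y = c by lia.
      by rewrite -hyc' hy in hcnt.
    by move: (hM _ hcn); rewrite (negbTE hnot) => /esym/negbFE.
  have hac : a <= c by lia.
  have hca : c < a + l by move: hc2; rewrite /e; lia.
  move=> x; rewrite mem_drop_uniq // ht.
  case: (boolP (1 <= x <= k.+1)) => hx /=; last first.
    apply/esym/negbTE/negP => hh; move/negP: hx; apply; lia.
  have hgx : 1 <= gg c e x <= n by move: hx; rewrite /gg /e; case: (leqP x c); lia.
  rewrite -(mem_map (@gg_inj c e)) hM // negbK.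
  exact: gg_arith.
Qed.

Lemma B1 n k u : 1 <= k -> 2 * k + 2 <= n -> inD k n u -> inB k.+1 (phi n u).
Proof.
move=> hk hn hD; have hD' := hD; move: hD' => [hsz [hu [ha [hp hpre]]]].
have [hc [c1 [c2 [hphi [hg [hperm hlast]]]]]] := @forward n k u hk hn hD.
move: hc c1 c2 hphi hg hperm hlast.
set c := head 0 (compl n u); set t := phi n u => hc c1 c2 hphi hg hperm hlast.
exists (rev t); split; last by rewrite revK.
split; first lia.
split; first by rewrite perm_rev.
move=> l hl2 hlk [c' hc'].
pose j := k.+1 - l.
have hjl : j + l = k.+1 by rewrite /j; lia.
have hsz_t : size t = k.+1 by rewrite (perm_size hperm) size_iota.
have hmem : forall x, (x \in take l (rev t)) = (x \in drop j t).
  by move=> x; rewrite take_rev mem_rev hsz_t.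
have hcd : c \in drop j t.
  rewrite hphi -map_drop drop_rcons; last by rewrite hsz /j; lia.
  by apply/mapP; exists c; [rewrite mem_rcons mem_head | rewrite /ff leqnn].
have hnt : forall x : nat, (x \in t) = (1 <= x <= k.+1).
  by move=> x; rewrite (perm_mem hperm) mem_iota; lia.
have hcb := proj1 (hc' c); rewrite hmem in hcb; have {hcb} hcb := hcb hcd.
have h0 : ~ (c' <= 0 <= c' + l%:Z - 1)%R.
  move=> /(proj2 (hc' 0)); rewrite hmem => /mem_drop; rewrite (hnt 0).
  done.
have h2 : ~ (c' <= (k.+2)%:Z <= c' + l%:Z - 1)%R.
  move=> /(proj2 (hc' k.+2)); rewrite hmem => /mem_drop; rewrite (hnt k.+2); lia.
have hck : c <= k.+1 by have := mem_drop hcd; rewrite (hnt c); lia.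
have hc'1 : (1 <= c')%R by lia.
have hc'2 : (c' + l%:Z <= (k.+2)%:Z)%R by lia.
case: c' hc' hcb h0 h2 hc'1 hc'2 => a; last by move=> *; lia.
move=> hc' _ _ _ ha1 ha2.
have hDD : forall x : nat, (x \in drop j t) = (a <= x < a + l).
  move=> x; rewrite -hmem; apply/idP/idP => [/(proj1 (hc' x)) | h]; first lia.
  by apply/(proj2 (hc' x)); lia.
have hkn : k.+1 <= n by lia.
have hM := proj1 (@key n k j l a c t hjl hkn (ltac:(lia)) (ltac:(lia)) hperm hcd) hDD.
have htake : take j u = map (gg c (n - k - 1)) (take j t).
  by rewrite map_take hg -cats1 takel_cat // hsz /j; lia.
have hci : compl n (take j u) = iota a (n - j).
  apply: compl_iota; [| lia | rewrite /j; lia].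
  by move=> x hx; rewrite htake hM.
apply: (hpre j); [rewrite /j; lia | rewrite /j; lia |].
rewrite hci; apply: periodic_iota; rewrite /j; lia.
Qed.

Lemma B2 n k u v : 1 <= k -> 2 * k + 2 <= n -> inD k n u -> inD k n v ->
  phi n u = phi n v -> u = v.
Proof.
move=> hk hn hu hv he.
have [_ [_ [_ [_ [hgu [_ hlu]]]]]] := @forward n k u hk hn hu.
have [_ [_ [_ [_ [hgv [_ hlv]]]]]] := @forward n k v hk hn hv.
have hc : head 0 (compl n u) = head 0 (compl n v) by rewrite -hlu -hlv he.
rewrite he hc hgv in hgu.
by case: (rcons_inj hgu) => ->.
Qed.

Lemma B3 n k b : 1 <= k -> 2 * k + 2 <= n -> inB k.+1 b ->
  exists u, inD k n u /\ phi n u = b.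
Proof.
move=> hk hn [a0 [[_ [hpa hni]] hb]].
have hperm : perm_eq b (iota 1 k.+1) by rewrite hb perm_rev.
have hsz_b : size b = k.+1 by rewrite (perm_size hperm) size_iota.
have hbu : uniq b by rewrite (perm_uniq hperm) iota_uniq.
have hnt : forall x : nat, (x \in b) = (1 <= x <= k.+1).
  by move=> x; rewrite (perm_mem hperm) mem_iota; lia.
have ha0 : a0 = rev b by rewrite hb revK.
clear hb hpa.
move: hperm hsz_b hbu hnt ha0; case/lastP: b => [|t' c]; first by [].
move=> hperm hsz hbu hnt ha0.
rewrite size_rcons in hsz; case: hsz => hsz.
move: hbu; rewrite rcons_uniq => /andP [hct' hut'].
pose e := n - k - 1.
pose u := map (gg c e) t'.
have hc : 1 <= c <= k.+1 by rewrite -(hnt c) mem_rcons mem_head.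
have ht' : forall y : nat, y \in t' -> (1 <= y <= k.+1) /\ y != c.
  move=> y hy; split; first by rewrite -(hnt y) mem_rcons inE hy orbT.
  by apply/negP => /eqP hyc; move: hct'; rewrite -hyc hy.
have hin_u : forall x : nat, 1 <= x <= n -> (x \in u) = ~~ (c <= x < c + (n - k)).
  move=> x hx; apply/idP/idP.
    move=> /mapP [y hy ->]; have [hy1 hy2] := ht' y hy.
    move: hy1 hy2; rewrite /gg /e; case: (leqP y c) => h1 h2 h3; lia.
  move=> hx2; apply/mapP; exists (ff c e x); last first.
    move: hx2; rewrite /ff /gg /e; case: (leqP x c) => h1 h2.
      by rewrite h1.
    have -> : (x - (n - k - 1) <= c) = false by apply/negbTE; lia.
    lia.
  have hy : ff c e x \in rcons t' c.
    rewrite (hnt _); move: hx2; rewrite /ff /e; case: (leqP x c) => h1 h2; lia.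
  move: hy; rewrite mem_rcons inE => /orP [/eqP hyc | //].
  move: hyc hx2; rewrite /ff /e; case: (leqP x c) => h1 h2 h3; lia.
have hcompl : compl n u = iota c (n - k) by apply: compl_iota => //; lia.
have hsu : size u = k by rewrite size_map.
have huu : uniq u by rewrite map_inj_uniq //; exact: gg_inj.
have hau : all (fun x => 1 <= x <= n) u.
  apply/allP => x /mapP [y hy ->]; have [hy1 _] := ht' y hy.
  move: hy1; rewrite /gg /e; case: (leqP y c) => h1 h2; lia.
exists u; split; last first.
  rewrite /phi hcompl.
  have -> : n - k = (n - k - 1).+1 by lia.
  rewrite /= -[c in rcons u c](_ : gg c e c = c); last by rewrite /gg leqnn.
  rewrite -map_rcons (@red_mono (gg c e) _ (gg_mono c e)).
  exact: (@red_id _ k.+1 hperm).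
split => //; split => //; split => //; split.
  rewrite hcompl; apply: periodic_iota; lia.
move=> j hj1 hjk hper.
have hsj : size (take j u) = j by rewrite size_takel // hsu; lia.
have hn' : 2 * size (take j u) + 2 <= n by rewrite hsj; lia.
have hat : all (fun x => 1 <= x <= n) (take j u).
  by apply/allP => x /mem_take hx; exact: (allP hau x hx).
have [hci [ha1 ha2]] := @periodic_compl n (take j u) (take_uniq _ huu) hat hn' hper.
move: hci ha1 ha2; rewrite hsj; set a := head 0 _ => hci ha1 ha2.
have htake : map (gg c e) (take j (rcons t' c)) = take j u.
  by rewrite -cats1 takel_cat ?hsz 1?ltnW // map_take.
have hM : forall x : nat, 1 <= x <= n ->
    (x \in map (gg c (n - k - 1)) (take j (rcons t' c))) = ~~ (a <= x < a + (n - j)).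
  move=> x hx; rewrite htake -mem_iota -hci mem_compl hx /= negbK //.
have hcd : c \in drop j (rcons t' c).
  by rewrite drop_rcons ?hsz 1?ltnW // mem_rcons mem_head.
pose l := k.+1 - j.
have hjl : j + l = k.+1 by rewrite /l; lia.
have hDD := proj2 (@key n k j l a c (rcons t' c) hjl (ltac:(lia)) ha1 (ltac:(rewrite /l; lia)) hperm hcd) hM.
apply: (hni l); [rewrite /l; lia | rewrite /l; lia |].
exists (Posz a) => x.
rewrite ha0 take_rev mem_rev size_rcons hsz.
have -> : k.+1 - l = j by rewrite /l; lia.
rewrite hDD; split => h; lia.
Qed.

Theorem mainTheorem11 (n k : nat) :
  3 <= n -> 1 <= k -> k < n./2 ->
  (exists g : seq nat -> seq nat,
      (forall u, inD k n u -> inA k.+1 (g u)) /\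
      (forall u v, inD k n u -> inD k n v -> g u = g v -> u = v) /\
      (forall s, inA k.+1 s -> exists u, inD k n u /\ g u = s)) /\
  ((forall u, inD k n u -> inB k.+1 (phi n u)) /\
   (forall u v, inD k n u -> inD k n v -> phi n u = phi n v -> u = v) /\
   (forall b, inB k.+1 b -> exists u, inD k n u /\ phi n u = b)).
Proof.
move=> h3 hk hkn.
have hn : 2 * k + 2 <= n.
  have := odd_double_half n; rewrite -muln2; lia.
split; last first.
  split; first by move=> u; exact: B1.
  split; first by move=> u v; exact: B2.
  by move=> b; exact: B3.
exists (fun u => rev (phi n u)); split.
  move=> u hu; have [a [ha hb]] := @B1 n k u hk hn hu.
  by rewrite hb revK.
split.
  move=> u v hu hv he; apply: (@B2 n k u v hk hn hu hv).
  by rewrite -(revK (phi n u)) he revK.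
move=> s hs.
have [u [hu he]] := @B3 n k (rev s) hk hn (ex_intro _ s (conj hs erefl)).
by exists u; split => //; rewrite he revK.
Qed.
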